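(* Let $(V,E)$ be an almost-acyclic $k$-uniform hypergraph, let $t$ be the number of its connected components with at least two vertices, and let $r=|E|$. Then every $B\in\mathcal B(E)$ satisfies $\|\Sigma B\|_{\mathsf H}\ge\max\{2t,\tfrac45r\}$.
   Context: $N\ge2$, $\mathbb Z_N=\mathbb Z/N\mathbb Z$. A $k$-uniform hypergraph $(V,E)$ has finite vertex set $V$ and a set $E$ of edges, each an ordered $k$-tuple of distinct vertices. It is almost-acyclic if for every $\ell\ge0$, any $\ell$ distinct edges together cover at least $\ell(k-1.1)$ vertices. For $y\in\mathbb Z_N^V$, $\|y\|_{\mathsf H}=|\mathrm{supp}(y)|$ is the number of nonzero coordinates. $\mathcal B(E)$ is the set of maps $B:E\to\mathbb Z_N^V$ such that for each $e=(v_1,\dots,v_k)\in E$, $\mathrm{supp}(B(e))\subseteq\{v_1,\dots,v_k\}$ and $|\mathrm{supp}(B(e))|\ge3$; $\Sigma B=\sum_{e\in E}B(e)\in\mathbb Z_N^V$. *)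

(* Defs.v *)
From HB Require Import structures.
From mathcomp Require Import all_boot all_order all_algebra.
Set Implicit Arguments. Unset Strict Implicit. Unset Printing Implicit Defensive.
Import Order.TTheory GRing.Theory Num.Theory.
Local Open Scope ring_scope.

Section HyperDefs.
Variables (V : finType) (k : nat).

Definition covered (F : {set k.-tuple V}) : {set V} :=
  [set v | [exists e in F, v \in (e : seq V)]].

Definition edges_ok (E : {set k.-tuple V}) : Prop :=
  forall e, e \in E -> uniq (e : seq V).

Definition almost_acyclic (E : {set k.-tuple V}) : Prop :=
  forall F : {set k.-tuple V}, F \subset E ->
    (#|F|%:R * (k%:R - 11%:R / 10%:R) <= (#|covered F|)%:R :> rat).

Definition hadj (E : {set k.-tuple V}) : rel V :=
  fun u v => [exists e in E, (u \in (e : seq V)) && (v \in (e : seq V))].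

Definition hcomponents (E : {set k.-tuple V}) : {set {set V}} :=
  [set [set v | connect (hadj E) u v] | u : V].

Definition n_big_components (E : {set k.-tuple V}) : nat :=
  #|[set C in hcomponents E | (1 < #|C|)%N]|.

Definition hamming (N : nat) (y : {ffun V -> 'Z_N}) : nat :=
  #|[set v | y v != 0]|.

Definition in_calB (N : nat) (E : {set k.-tuple V})
    (B : k.-tuple V -> {ffun V -> 'Z_N}) : Prop :=
  forall e, e \in E ->
    [set v | B e v != 0] \subset [set v | v \in (e : seq V)] /\
    (3 <= #|[set v | B e v != 0%R]|)%N.

Definition SigmaB (N : nat) (E : {set k.-tuple V})
    (B : k.-tuple V -> {ffun V -> 'Z_N}) : {ffun V -> 'Z_N} :=
  \sum_(e in E) B e.

End HyperDefs.

(* Main.v *)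
Require Import Defs.
From HB Require Import structures.
From mathcomp Require Import all_boot all_order all_algebra.
From mathcomp Require Import zify ring lra.
Import Order.TTheory GRing.Theory Num.Theory.
Local Open Scope ring_scope.

Lemma card_sumT (T : finType) (P : pred T) :
  #|[set x | P x]| = (\sum_x (P x : nat))%N.
Proof.
rewrite -sum1_card big_mkcond /=; apply: eq_bigr => x _; rewrite inE.
by case: (P x).
Qed.

Lemma card_sumA (T : finType) (A : {set T}) (P : pred T) :
  #|[set x in A | P x]| = (\sum_(x in A) (P x : nat))%N.
Proof.
rewrite -sum1_card big_mkcond /= [RHS]big_mkcond; apply: eq_bigr => x _.
rewrite inE; by case: (x \in A); case: (P x).
Qed.

Definition dF (N : nat) (V : finType) (k : nat) (B : k.-tuple V -> {ffun V -> 'Z_N})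
  (F : {set k.-tuple V}) (v : V) : nat := #|[set e in F | B e v != 0]|.
Arguments dF {N V k}.
Definition oneF (N : nat) (V : finType) (k : nat) (B : k.-tuple V -> {ffun V -> 'Z_N})
  (F : {set k.-tuple V}) : {set V} := [set v | dF B F v == 1%N].
Arguments oneF {N V k}.

Lemma one_bound (N : nat) (V : finType) (k : nat)
    (E : {set k.-tuple V}) (B : k.-tuple V -> {ffun V -> 'Z_N}) (F : {set k.-tuple V}) :
  edges_ok E -> in_calB E B -> F \subset E ->
  (3 * #|F| + 2 * #|covered F| <= #|oneF B F| + 2 * k * #|F|)%N.
Proof.
move=> hok hB sFE.
pose g v := #|[set e in F | v \in (e : seq V)]|.
have sd : (3 * #|F| <= \sum_v dF B F v)%N.
  have -> : (\sum_v dF B F v = \sum_(e in F) #|[set v | B e v != 0%R]|)%N.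
    rewrite /dF.
    under eq_bigr do rewrite card_sumA.
    rewrite exchange_big /=; apply: eq_bigr => e _; by rewrite card_sumT.
  rewrite mulnC -sum_nat_const; apply: leq_sum => e eF.
  by case: (hB e (subsetP sFE e eF)).
have sg : (\sum_v g v = k * #|F|)%N.
  rewrite /g; under eq_bigr do rewrite card_sumA.
  rewrite exchange_big /= mulnC -sum_nat_const; apply: eq_bigr => e eF.
  rewrite -card_sumT cardsE.
  have /card_uniqP -> : uniq (e : seq V) by apply: hok; apply: (subsetP sFE).
  by rewrite size_tuple.
have pw : forall v, (dF B F v + 2 * (v \in covered F) <= (dF B F v == 1%N) + 2 * g v)%N.
  move=> v.
  have dg : (dF B F v <= g v)%N.
    apply: subset_leq_card; apply/subsetP => e; rewrite !inE => /andP[eF Bv].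
    rewrite eF /=; have [h _] := hB e (subsetP sFE e eF).
    by have := subsetP h v; rewrite !inE; apply.
  have cg : (v \in covered F) = (0 < g v)%N.
    rewrite /covered inE card_gt0; apply/existsP/set0Pn => [[e /andP[eF ve]]|[e]].
      by exists e; rewrite inE eF.
    by rewrite inE => /andP[eF ve]; exists e; rewrite eF.
  rewrite cg; case: (dF B F v == 1%N) / eqP; case: (0 < g v)%N / idP => /=; lia.
have : (\sum_v (dF B F v + 2 * (v \in covered F)) <= \sum_v ((dF B F v == 1%N) + 2 * g v))%N.
  by apply: leq_sum => v _; exact: pw.
rewrite big_split /= -big_distrr /= big_split /= -big_distrr /= sg.
rewrite -card_sumT -card_sumT.
have -> : [set x | x \in covered F] = covered F by apply/setP => x; rewrite inE.
rewrite -/(oneF B F).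
rewrite -mulnA => H; apply: leq_trans H; rewrite leq_add2r; exact: sd.
Qed.

Lemma one_rat (N : nat) (V : finType) (k : nat)
    (E : {set k.-tuple V}) (B : k.-tuple V -> {ffun V -> 'Z_N}) (F : {set k.-tuple V}) :
  edges_ok E -> almost_acyclic E -> in_calB E B -> F \subset E ->
  (4%:R / 5%:R) * (#|F|)%:R <= (#|oneF B F|)%:R :> rat.
Proof.
move=> hok hac hB sFE.
have h1 := one_bound _ _ _ _ _ _ hok hB sFE.
have h2 := hac F sFE.
move: h1; rewrite -(ler_nat rat) !natrD !natrM => h1.
move: h1 h2.
set f := (#|F|)%:R; set c := (#|covered F|)%:R; set o := (#|oneF B F|)%:R.
move=> h1 h2.
idtac.
nra.
Qed.

Lemma one_hamming (N : nat) (V : finType) (k : nat)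
    (E : {set k.-tuple V}) (B : k.-tuple V -> {ffun V -> 'Z_N}) :
  (#|oneF B E| <= hamming (SigmaB E B))%N.
Proof.
apply: subset_leq_card; apply/subsetP => v; rewrite !inE => /cards1P [e0 he0].
have : e0 \in [set e in E | B e v != 0] by rewrite he0 inE.
rewrite inE => /andP [e0E Be0].
rewrite /SigmaB sum_ffunE (bigD1 e0) //= big1 ?addr0 // => e /andP [eE ne].
apply/eqP; apply: contraNT ne => Bev.
have : e \in [set e in E | B e v != 0] by rewrite inE eE.
by rewrite he0 inE.
Qed.

Lemma one_ge2 (N : nat) (V : finType) (k : nat)
    (E : {set k.-tuple V}) (B : k.-tuple V -> {ffun V -> 'Z_N}) (F : {set k.-tuple V}) :
  edges_ok E -> almost_acyclic E -> in_calB E B -> F \subset E -> (0 < #|F|)%N ->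
  (2 <= #|oneF B F|)%N.
Proof.
move=> hok hac hB sFE F0.
case: (eqVneq #|F| 1%N) => [/eqP/cards1P [e he]|F1].
  have eE : e \in E by apply: (subsetP sFE); rewrite he set11.
  have [_ h3] := hB e eE.
  apply: leq_trans (leq_trans _ h3) _ => //.
  apply: subset_leq_card; apply/subsetP => v; rewrite !inE /dF he => Bv.
  apply/cards1P; exists e; apply/setP => x; rewrite !inE.
  by case: (eqVneq x e) => [->|]; rewrite ?Bv ?andbF.
have F2 : (2 <= #|F|)%N by rewrite ltn_neqAle eq_sym F1 F0.
have h := one_rat _ _ _ _ _ _ hok hac hB sFE.
have h2 : (2%:R <= (#|F|)%:R :> rat) by rewrite ler_nat.
have : (1%:R < (#|oneF B F|)%:R :> rat).
  move: h h2; set f := (#|F|)%:R; set o := (#|oneF B F|)%:R => h h2; lra.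
by rewrite ltr_nat.
Qed.

Lemma hadj_sym (V : finType) (k : nat) (E : {set k.-tuple V}) : symmetric (hadj E).
Proof.
move=> u v; rewrite /hadj; apply/existsP/existsP => [[e /andP[eE /andP[a b]]]|[e /andP[eE /andP[a b]]]];
  by exists e; rewrite eE a b.
Qed.

Lemma comp_bound (N : nat) (V : finType) (k : nat)
    (E : {set k.-tuple V}) (B : k.-tuple V -> {ffun V -> 'Z_N}) :
  edges_ok E -> almost_acyclic E -> in_calB E B ->
  (2 * n_big_components E <= #|oneF B E|)%N.
Proof.
move=> hok hac hB.
have csym := sym_connect_sym (hadj_sym _ _ E).
have supp : forall e v, e \in E -> B e v != 0 -> v \in (e : seq V).
  move=> e v eE Bv; have [h _] := hB e eE.
  by have := subsetP h v; rewrite !inE; apply.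
pose P := [set C in hcomponents E | (1 < #|C|)%N].
have uniqC : forall v, (\sum_(C in P) (v \in C) <= 1)%N.
  move=> v; rewrite -card_sumA.
  apply: leq_trans (_ : #|[set [set w | connect (hadj E) v w]]| <= 1)%N; last by rewrite cards1.
  apply: subset_leq_card; apply/subsetP => C; rewrite !inE => /andP[/andP[/imsetP[u _ ->] _]].
  rewrite inE => uv; apply/eqP/setP => w; rewrite !inE.
  by rewrite (same_connect csym uv).
have perC : forall C, C \in P -> (2 <= #|oneF B E :&: C|)%N.
  move=> C; rewrite inE => /andP[/imsetP[u _ ->] C1].
  set Cu := [set v | connect (hadj E) u v] in C1 *.
  pose FC := [set e in E | [exists w, (w \in Cu) && (w \in (e : seq V))]].
  have sFE : FC \subset E by apply/subsetP => e; rewrite inE => /andP[].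
  have eqone : oneF B FC = oneF B E :&: Cu.
    apply/setP => v; rewrite in_setI.
    case vC: (v \in Cu); rewrite ?andbT ?andbF /oneF !inE /dF.
      suff -> : [set e in FC | B e v != 0] = [set e in E | B e v != 0] by []. apply/setP => e; rewrite !inE.
      apply/andP/andP => [[/andP[eE _] Bv]|[eE Bv]]; first by [].
      split=> //; rewrite eE /=; apply/existsP; exists v; rewrite vC /=; exact: supp.
    apply/negbTE; rewrite eqn_leq negb_and; apply/orP; right.
    rewrite -ltnNge ltnS leqn0 cards_eq0; apply/eqP/setP => e; rewrite !inE.
    apply/negbTE; apply/negP => /andP[/andP[eE /existsP[w /andP[wC we]]] Bv].
    have ve := supp _ _ eE Bv.
    move: vC; rewrite inE; move: wC; rewrite inE => uw.
    rewrite (connect_trans uw) // connect1 //; apply/existsP; exists e; by rewrite eE we ve.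
  rewrite -eqone; apply: one_ge2 hok hac hB sFE _.
  have : (0 < #|Cu :\ u|)%N.
    move: C1; rewrite (cardsD1 u) inE connect0 /=; by [].
  rewrite card_gt0 => /set0Pn [v]; rewrite !inE => /andP[vu /connectP [p pth lst]].
  case: p pth lst => [|x p] /=; first by move=> _ vu'; rewrite vu' eqxx in vu.
  move=> /andP[/existsP[e /andP[eE /andP[ue xe]]] _] _.
  apply/card_gt0P; exists e; rewrite inE eE /=; apply/existsP; exists u.
  by rewrite inE connect0 ue.
have step1 : (\sum_(C in P) #|oneF B E :&: C| <= #|oneF B E|)%N.
  have -> : (\sum_(C in P) #|oneF B E :&: C| = \sum_(C in P) \sum_(v in oneF B E) (v \in C))%N.
    apply: eq_bigr => C _; rewrite -card_sumA; congr #|_|; apply/setP => v; rewrite !inE.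
  rewrite exchange_big /= -sum1_card; apply: leq_sum => v _; exact: uniqC.
have step2 : (2 * #|P| <= \sum_(C in P) #|oneF B E :&: C|)%N.
  rewrite mulnC -sum_nat_const; apply: leq_sum => C; exact: perC.
exact: leq_trans step2 step1.
Qed.

Theorem lemma7p10 (N : nat) (hN : (1 < N)%N) (V : finType) (k : nat)
    (E : {set k.-tuple V}) (B : k.-tuple V -> {ffun V -> 'Z_N}) :
  edges_ok E -> almost_acyclic E -> in_calB E B ->
  ((2 * n_big_components E)%:R <= (hamming (SigmaB E B))%:R :> rat) /\
  ((4%:R / 5%:R) * (#|E|)%:R <= (hamming (SigmaB E B))%:R :> rat).
Proof.
move=> hok hac hB.
have hh := one_hamming _ _ _ E B.
split.
  rewrite ler_nat; apply: leq_trans hh.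
  exact: (comp_bound _ _ _ E B hok hac hB).
have h1 := one_rat _ _ _ _ _ _ hok hac hB (subxx E).
apply: (le_trans h1); by rewrite ler_nat.
Qed.
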